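(* Let $p,q\geq 3$, let $K_p$ be the complete graph on $p$ vertices and $C_q$ the cycle on $q$ vertices. Then $\mathrm{mbt}(K_p\Box C_q)\geq \Delta(K_p\Box C_q)+1$.
   Context: A book embedding of a graph $G$ consists of a linear ordering of $V(G)$ (the vertices placed on the spine) together with an assignment of each edge to one of a set of pages such that no two edges on the same page cross, i.e. there are no two edges $uv$, $xy$ on the same page with $u<x<v<y$ in the ordering. A book embedding is matching if on every page each vertex is incident with at most one edge of that page. The matching book thickness $\mathrm{mbt}(G)$ is the minimum number of pages over all matching book embeddings of $G$. $\Delta(G)$ denotes the maximum degree of $G$. The Cartesian product $G\Box B$ has vertex set $V(G)\times V(B)$, with $(u_1,v_1)$ adjacent to $(u_2,v_2)$ iff either $u_1=u_2$ and $v_1v_2\in E(B)$, or $v_1=v_2$ and $u_1u_2\in E(G)$. *)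

(* Defs.v *)
(* Simple graphs are symmetric irreflexive relations on a finType. *)
From mathcomp Require Import all_boot.
Set Implicit Arguments. Unset Strict Implicit. Unset Printing Implicit Defensive.

Definition complete_graph (p : nat) : rel 'I_p := fun x y => x != y.

Definition cycle_graph (q : nat) : rel 'I_q :=
  fun x y => (x != y) && ((y == (x.+1 %% q) :> nat) || (x == (y.+1 %% q) :> nat)).

Definition cart_prod (V W : finType) (G : rel V) (B : rel W) : rel (V * W) :=
  fun a b => ((a.1 == b.1) && B a.2 b.2) || ((a.2 == b.2) && G a.1 b.1).

Definition max_degree (V : finType) (G : rel V) : nat :=
  \max_(v : V) #|[set w | G v w]|.

(* A matching book embedding of G with k pages: an injective spine position
   pos (a linear order of V) and a page assignment pg of edges (symmetric on
   edges) such that no two edges on the same page cross, and every vertex is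
   incident with at most one edge of each page. *)
Definition matching_book_embedding (V : finType) (G : rel V) (k : nat)
    (pos : V -> nat) (pg : V -> V -> 'I_k) : Prop :=
  [/\ injective pos,
      (forall u v, G u v -> pg u v = pg v u),
      (forall u v x y, G u v -> G x y -> pg u v = pg x y ->
          ~ [/\ pos u < pos x, pos x < pos v & pos v < pos y])
    & (forall u v w, G u v -> G u w -> pg u v = pg u w -> v = w)].

Definition has_mbe (V : finType) (G : rel V) (k : nat) : Prop :=
  exists pos pg, @matching_book_embedding V G k pos pg.

Arguments complete_graph p : clear implicits.
Arguments cycle_graph q : clear implicits.

(* Main.v *)
Require Import Defs.
From mathcomp Require Import all_boot.
From mathcomp Require Import zify.
Set Implicit Arguments. Unset Strict Implicit. Unset Printing Implicit Defensive.

Lemma even_invol (T : finType) (f : T -> T) (S : {set T}) :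
  (forall x, x \in S -> f x \in S) -> (forall x, x \in S -> f (f x) = x) ->
  (forall x, x \in S -> f x != x) -> ~~ odd #|S|.
Proof.
move: {2}#|S| (leqnn #|S|) => m; elim: m S => [|m IH] S.
  by rewrite leqn0 => /eqP ->.
move=> hS fS ff fx.
case: (set_0Vmem S) => [-> | [x xS]]; first by rewrite cards0.
have fxS : f x \in S :\ x by rewrite !inE fx // fS.
have E : #|S| = (#|S :\ x :\ f x|).+2.
  by rewrite (cardsD1 x S) xS (cardsD1 (f x) (S :\ x)) fxS.
rewrite E /= negbK; apply: IH.
- by move: hS; rewrite E; lia.
- move=> y; rewrite !inE => /and3P [y1 y2 yS].
  rewrite fS // andbT; apply/andP; split.
  + apply: contra y2 => /eqP h; apply/eqP.
    by rewrite -(ff y yS) h (ff x xS).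
  + apply: contra y1 => /eqP h; apply/eqP.
    by rewrite -(ff y yS) h.
- by move=> y; rewrite !inE => /and3P [_ _ yS]; exact: ff.
- by move=> y; rewrite !inE => /and3P [_ _ yS]; exact: fx.
Qed.

Lemma edge_parity (V : finType) (G : rel V) (k : nat) (pos : V -> nat)
  (pg : V -> V -> 'I_k) :
  (forall u v, G u v = G v u) -> (forall u, G u u = false) ->
  matching_book_embedding G pos pg ->
  (forall u (i : 'I_k), exists w, G u w && (pg u w == i)) ->
  forall u v, G u v ->
  odd #|[set y | pos y < pos u]| != odd #|[set y | pos y < pos v]|.
Proof.
move=> Gsym Girr [inj psym ncr mat] full.
have key : forall u v, G u v -> pos u < pos v ->
  odd #|[set y | pos y < pos u]| != odd #|[set y | pos y < pos v]|.
  move=> u v huv luv.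
  set B := [set y | pos u < pos y < pos v].
  pose i := pg u v.
  pose f x := odflt x [pick w | G x w && (pg x w == i)].
  have fP : forall x, G x (f x) && (pg x (f x) == i).
    move=> x; rewrite /f; case: pickP => [w -> //|h].
    by have [w hw] := full x i; rewrite h in hw.
  have evB : ~~ odd #|B|.
    apply: (@even_invol _ f).
    - move=> x; rewrite !inE => /andP [h1 h2].
      have /andP [hxw /eqP pw] := fP x.
      have wu : f x != u.
        apply/eqP => e; move: hxw pw; rewrite e => hxu pxu.
        have : x = v.
          apply: (mat u x v); [by rewrite Gsym | exact: huv|].
          by rewrite (psym u x) ?pxu // Gsym.
        by move=> ex; rewrite ex ltnn in h2.
      have wv : f x != v.
        apply/eqP => e; move: hxw pw; rewrite e => hxv pxv.
        have : x = u.
          apply: (mat v x u); [by rewrite Gsym | by rewrite Gsym|].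
          by rewrite (psym v x) ?pxv ?(psym v u) // Gsym.
        by move=> ex; rewrite ex ltnn in h1.
      have pwu : pos (f x) != pos u by apply: contra wu => /eqP /inj ->.
      have pwv : pos (f x) != pos v by apply: contra wv => /eqP /inj ->.
      case: (ltnP (pos (f x)) (pos u)) => [lt1|ge1].
        exfalso; apply: (ncr (f x) x u v); [by rewrite Gsym| exact: huv| |].
          by rewrite psym ?pw // Gsym.
        by split.
      case: (ltnP (pos v) (pos (f x))) => [lt2|ge2].
        exfalso; apply: (ncr u v x (f x)) => //.
      apply/andP; split; lia.
    - move=> x _.
      have /andP [hxw /eqP pw] := fP x.
      have /andP [hww /eqP pww] := fP (f x).
      apply: (mat (f x)) => //; first by rewrite Gsym.
      by rewrite pww -psym.
    - move=> x _; have /andP [hxw _] := fP x.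
      by apply/eqP => e; move: hxw; rewrite e Girr.
  have E : #|[set y | pos y < pos v]| = #|[set y | pos y < pos u]| + #|B|.+1.
    rewrite -(cardsID [set y | pos y < pos u] [set y | pos y < pos v]).
    have -> : [set y | pos y < pos v] :&: [set y | pos y < pos u]
              = [set y | pos y < pos u].
      apply/setP => y; rewrite !inE; case: ltnP => //= h; lia.
    congr (_ + _).
    have -> : [set y | pos y < pos v] :\: [set y | pos y < pos u] = u |: B.
      apply/setP => y; rewrite !inE.
      case: (eqVneq y u) => [->|ne] /=; first by rewrite ltnn luv.
      have : pos y != pos u by apply: contra ne => /eqP /inj ->.
      lia.
    by rewrite cardsU1 !inE ltnn.
  rewrite E oddD /=.
  by move: evB; case: (odd #|B|); case: (odd _).
move=> u v huv.
case: (ltngtP (pos u) (pos v)) => [l|l|e].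
- exact: key.
- by rewrite eq_sym; apply: key => //; rewrite Gsym.
- by move: huv; rewrite (inj _ _ e) Girr.
Qed.

Lemma modS q (x : nat) : x < q -> x.+1 %% q = if x.+1 == q then 0 else x.+1.
Proof.
move=> hx; case: eqP => [->|ne]; first by rewrite modnn.
by rewrite modn_small //; lia.
Qed.

Lemma cyc_deg q (hq : 3 <= q) (b : 'I_q) : #|[set b' | cycle_graph q b b']| = 2.
Proof.
have q0 : 0 < q by lia.
pose s := Ordinal (ltn_pmod b.+1 q0).
pose t := Ordinal (ltn_pmod (b + q.-1) q0).
have vs : val s = if b.+1 == q then 0 else b.+1 by rewrite /= modS.
have vt : val t = if (b : nat) == 0 then q.-1 else (b : nat).-1.
  rewrite /=; case: eqP => [->|ne]; first by rewrite add0n modn_small //; move: (ltn_ord b); lia.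
  have -> : b + q.-1 = (b.-1) + q by lia.
  by rewrite modnDr modn_small //; move: (ltn_ord b); lia.
have -> : [set b' | cycle_graph q b b'] = [set s; t].
  apply/setP => x; rewrite !inE /cycle_graph -!val_eqE vs vt modS // modS //.
  move: (ltn_ord x) (ltn_ord b) vs vt.
  case: x => x hx; case: b s t => b hb s t /= _ _ _ _.
  by case: (x.+1 =P q); case: (b.+1 =P q); case: (b =P 0); case: (x =P b);
    case: (x =P 0); intros; lia.
rewrite cards2; suff -> : (s != t) by [].
rewrite -val_eqE vs vt.
case: (b.+1 =P q); case: ((b:nat) =P 0); move: (ltn_ord b); intros; lia.
Qed.

Lemma prod_deg p q (hp : 1 <= p) (hq : 3 <= q) (v : 'I_p * 'I_q) :
  #|[set w | cart_prod (complete_graph p) (cycle_graph q) v w]| = p.+1.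
Proof.
case: v => a b.
set N := [set w | _].
pose X := [set w : 'I_p * 'I_q | w.1 == a].
rewrite -(cardsID X N).
have E1 : N :&: X = setX [set a] [set b' | cycle_graph q b b'].
  apply/setP => [[a' b']]; rewrite !inE /cart_prod /complete_graph /=.
  by case: (a' =P a) => [->|/eqP ne]; rewrite ?eqxx ?andbF ?andbT //= ?orbF.
have E2 : N :\: X = setX [set~ a] [set b].
  apply/setP => [[a' b']]; rewrite !inE /cart_prod /complete_graph /=.
  case: (a' =P a) => [->|/eqP ne]; rewrite ?eqxx ?andbF ?andbT //= ?andbF //.
  by rewrite !(eq_sym a a') (negbTE ne) /= (eq_sym b) andbT.
rewrite E1 E2 !cardsX cards1 cyc_deg // cardsC1 cards1 card_ord; lia.
Qed.

Lemma full_pages (V : finType) (G : rel V) (k : nat) (pos : V -> nat)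
  (pg : V -> V -> 'I_k) d :
  matching_book_embedding G pos pg -> (forall u, #|[set w | G u w]| = d) ->
  k <= d -> forall u (i : 'I_k), exists w, G u w && (pg u w == i).
Proof.
move=> [_ _ _ mat] hd hk u i.
set N := [set w | G u w].
have inj : {in N &, injective (pg u)}.
  by move=> x y; rewrite !inE => hx hy e; apply: (mat u).
have ci : #|pg u @: N| = d by rewrite card_in_imset // hd.
have : pg u @: N = [set: 'I_k].
  apply/eqP; rewrite eqEcard subsetT /= cardsT card_ord ci //.
move=> /setP /(_ i); rewrite inE => /imsetP [w]; rewrite inE => hw ->.
by exists w; rewrite hw eqxx.
Qed.

Theorem lemma2p2 (p q : nat) (hp : 3 <= p) (hq : 3 <= q) (k : nat) :
  has_mbe (cart_prod (complete_graph p) (cycle_graph q)) k ->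
  max_degree (cart_prod (complete_graph p) (cycle_graph q)) + 1 <= k.
Proof.
move=> [pos [pg mbe]].
set G := cart_prod (complete_graph p) (cycle_graph q).
have hdeg : forall u, #|[set w | G u w]| = p.+1.
  by move=> u; apply: prod_deg => //; lia.
have hmax : max_degree G <= p.+1.
  by apply/bigmax_leqP => v _; rewrite hdeg.
rewrite addn1; apply: (leq_ltn_trans hmax); rewrite ltnNge; apply/negP => hk.
have full := full_pages mbe hdeg hk.
have Gsym : forall u v, G u v = G v u.
  move=> [a b] [a' b']; rewrite /G /cart_prod /complete_graph /cycle_graph /=.
  rewrite !(eq_sym a a') !(eq_sym b b'); congr (_ || _); congr [&& _, _ & _]; exact: orbC.
have Girr : forall u, G u u = false.
  by move=> [a b]; rewrite /G /cart_prod /complete_graph /cycle_graph /= !eqxx.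
have par := edge_parity Gsym Girr mbe full.
have q0 : 0 < q by lia.
pose b0 := Ordinal q0.
have l0 : 0 < p by lia.
have l1 : 1 < p by lia.
have l2 : 2 < p by lia.
pose x := (Ordinal l0, b0); pose y := (Ordinal l1, b0); pose z := (Ordinal l2, b0).
have exy : G x y by [].
have eyz : G y z by [].
have exz : G x z by [].
move: (par _ _ exy) (par _ _ eyz) (par _ _ exz).
by case: (odd _); case: (odd _); case: (odd _).
Qed.
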